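(* Let $n$ be a positive integer and let $w_1 \le w_2 \le \dots \le w_m$ be a feasible partition of $n$. Then $w_1 = 1$.
   Context: For a positive integer $n$, call a multiset of positive integers $\{w_1,\dots,w_k\}$ with $w_1+\dots+w_k=n$ a weighing partition of $n$ if every integer $\ell$ with $1\le \ell\le n$ can be written as $\ell=\sum_{j=1}^k u_j w_j$ with each $u_j\in\{-1,0,1\}$; this models weighing $\ell$ kg of goods in one weighing on a two-pan balance, with weights allowed on both pans. Let $m=m(n)$ be the minimum number of parts of a weighing partition of $n$. A feasible partition of $n$ is a weighing partition of $n$ with exactly $m$ parts, written in nondecreasing order $w_1\le w_2\le\dots\le w_m$. *)

(* Defs.v *)
From mathcomp Require Import all_boot all_order all_algebra.
Set Implicit Arguments. Unset Strict Implicit. Unset Printing Implicit Defensive.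
Import Order.TTheory GRing.Theory Num.Theory.
Local Open Scope ring_scope.

(* A multiset of positive integers is represented by a seq nat (order irrelevant). *)

Definition representable (w : seq nat) (l : nat) : Prop :=
  exists u : seq int,
    size u = size w /\
    all (fun x : int => (x == -1) || (x == 0) || (x == 1)) u /\
    \sum_(j < size w) nth 0 u j * (nth 0%N w j)%:Z = l%:Z.

Definition weighing_partition (n : nat) (w : seq nat) : Prop :=
  all (fun x => 0 < x)%N w /\ sumn w = n /\
  forall l : nat, (1 <= l <= n)%N -> representable w l.

Definition feasible_partition (n : nat) (w : seq nat) : Prop :=
  weighing_partition n w /\
  (forall w' : seq nat, weighing_partition n w' -> (size w <= size w')%N) /\
  sorted leq w.

(* Main.v *)
Require Import Defs.
From mathcomp Require Import all_boot all_order all_algebra.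
From mathcomp Require Import zify.
Import Order.TTheory GRing.Theory Num.Theory.
Local Open Scope nat_scope.

Theorem theorem1 (n : nat) (w : seq nat) :
  (0 < n)%N -> feasible_partition n w -> head 0%N w = 1%N.
Proof.
move=> n0 [[pos [sw rep]] [_ so]].
have all2 : (forall x, x \in w -> 2 <= x)%N -> False.
  move=> H2.
  case: w pos sw rep so H2 => [|a s] pos sw rep so H2; first by rewrite -sw in n0.
  have a2 : (2 <= a)%N by apply: H2; rewrite inE eqxx.
  have n2 : (2 <= n)%N by rewrite -sw /=; lia.
  have [|u [su [uall usum]]] := rep n.-1; first by apply/andP; split; lia.
  set w' := a :: s in su usum H2.
  have sumw : (\sum_(j < size w') Posz (nth 0%N w' j) = Posz n)%R.
    rewrite -sw -(big_mkord xpredT (fun j => Posz (nth 0%N w' j))).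
    rewrite -(big_nth 0%N xpredT (fun x => Posz x)).
    by rewrite sumnE (big_morph Posz PoszD (erefl _)).
  have key : (\sum_(j < size w') ((1 - nth 0 u j) * Posz (nth 0%N w' j)) = 1)%R.
    rewrite (eq_bigr (fun j : 'I_(size w') => Posz (nth 0%N w' j) - nth 0 u j * Posz (nth 0%N w' j))%R); last by move=> j _; rewrite mulrBl mul1r.
    rewrite sumrB sumw usum.
    have : (n = n.-1 + 1)%N by lia.
    by move=> {1}->; rewrite PoszD addrAC subrr add0r.
  have P : ((fun x : int => (x == 0) || (2 <= x))%R
     (\sum_(j < size w') ((1 - nth 0 u j) * Posz (nth 0%N w' j))))%R.
    apply: (big_ind (fun x : int => (x == 0) || (2 <= x))%R) => //=.
      move=> x y /orP[] hx /orP[] hy; apply/orP; lia.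
    move=> j _.
    have hj : (j < size u)%N by rewrite su ltn_ord.
    have := all_nthP (0%R : int) uall j hj.
    have := H2 (nth 0%N w' j) (@mem_nth _ 0%N w' j (ltn_ord j)).
    move=> hw /orP[/orP[]|] /eqP ->; apply/orP; lia.
  by move: P; rewrite key.
case: w pos sw rep so all2 => [|a s] pos sw rep so all2; first by rewrite -sw in n0.
rewrite /=.
have a0 : (0 < a)%N by move: pos => /= /andP[].
case: (ltngtP a 1) => //; first lia.
move=> a2; exfalso; apply: all2 => x; rewrite inE => /orP[/eqP -> //|xs].
have := order_path_min leq_trans so.
move=> /allP /(_ x xs); lia.
Qed.
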